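(* Let $f_i:\mathbb{R}^p\to\mathbb{R}$, $1\le i\le n$, be $L_i$-smooth for some $L_i>0$, and suppose $f=\frac1n\sum_{i=1}^nf_i$ takes the form $f(x)=g(Hx)$ for an $\alpha$-strongly convex ($\alpha>0$) and $\mathbf{L}$-smooth function $g:\mathbb{R}^m\to\mathbb{R}$ and $H\in\mathbb{R}^{m\times p}$, and that the set $X^*$ of minimizers of $f$ is nonempty. Assume one of the following holds: (1) each $f_i$ is bounded below, $1\le i\le n$; (2) $f_i(x)=f_i(x+v)$ for all $x\in\mathbb{R}^p$, all $v\in\mathrm{Ker}(H)$ and all $1\le i\le n$. Then $$\sup_{x\in X^*}\Big(\sum_{j=1}^n\|\nabla f_j(x)\|^2\Big)^{1/2}<\infty.$$
   Context: $h$ is $L$-smooth if $\|\nabla h(x)-\nabla h(y)\|\le L\|x-y\|$ for all $x,y$; $\alpha$-strongly convex if $h(y)\ge h(x)+\langle y-x,\nabla h(x)\rangle+\frac\alpha2\|y-x\|^2$ for all $x,y$. $X^*=\{x\in\mathbb{R}^p: f(x)=\min f\}$. Norms are Euclidean. *)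

(* Defs.v *)
From HB Require Import structures.
From mathcomp Require Import all_boot all_order all_algebra.
From mathcomp Require Import all_classical all_reals all_analysis.
Set Implicit Arguments. Unset Strict Implicit. Unset Printing Implicit Defensive.
Import Order.TTheory GRing.Theory Num.Theory.
Import numFieldNormedType.Exports.
Local Open Scope ring_scope.

Definition dotv {R : realType} {k : nat} (u v : 'cV[R]_k) : R :=
  \sum_(i < k) u i 0 * v i 0.
Definition enorm {R : realType} {k : nat} (v : 'cV[R]_k) : R :=
  Num.sqrt (dotv v v).

(* gf is the gradient of f: f is (Frechet) differentiable everywhere and its
   differential at x is v |-> <gf x, v>.  (Differentiability does not depend
   on the choice of norm in finite dimension.) *)
Definition is_gradient {R : realType} {k : nat}
  (f : 'cV[R]_k -> R) (gf : 'cV[R]_k -> 'cV[R]_k) : Prop :=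
  forall x, differentiable f x /\ forall v, ('d f x : 'cV[R]_k -> R) v = dotv (gf x) v.

Definition L_smooth {R : realType} {k : nat}
  (f : 'cV[R]_k -> R) (gf : 'cV[R]_k -> 'cV[R]_k) (L : R) : Prop :=
  is_gradient f gf /\ forall x y, enorm (gf x - gf y) <= L * enorm (x - y).

Definition strongly_convex {R : realType} {k : nat}
  (f : 'cV[R]_k -> R) (gf : 'cV[R]_k -> 'cV[R]_k) (alpha : R) : Prop :=
  is_gradient f gf /\
  forall x y, f y >= f x + dotv (y - x) (gf x) + alpha / 2 * enorm (y - x) ^+ 2.

Definition argmin_set {R : realType} {k : nat} (h : 'cV[R]_k -> R) : set 'cV[R]_k :=
  [set x | forall y, h x <= h y].

(* Main.v *)
Require Import Defs.
From HB Require Import structures.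
From mathcomp Require Import all_boot all_order all_algebra.
From mathcomp Require Import all_classical all_reals all_analysis.
From mathcomp Require Import ring lra.
Import Order.TTheory GRing.Theory Num.Theory.
Import numFieldNormedType.Exports.
Local Open Scope ring_scope.


Section S.
Context {R : realType} {k : nat}.
Implicit Types u v w : 'cV[R]_k.

Lemma dotvC u v : dotv u v = dotv v u.
Proof. by apply: eq_bigr => i _; rewrite mulrC. Qed.
Lemma dotvDl u v w : dotv (u + v) w = dotv u w + dotv v w.
Proof. by rewrite /dotv -big_split; apply: eq_bigr => i _; rewrite !mxE mulrDl. Qed.
Lemma dotvZl a u v : dotv (a *: u) v = a * dotv u v.
Proof. by rewrite /dotv mulr_sumr; apply: eq_bigr => i _; rewrite !mxE mulrA. Qed.
Lemma dotvNl u v : dotv (- u) v = - dotv u v.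
Proof. by rewrite -scaleN1r dotvZl mulN1r. Qed.
Lemma dotvBl u v w : dotv (u - v) w = dotv u w - dotv v w.
Proof. by rewrite dotvDl dotvNl. Qed.
Lemma dotvDr u v w : dotv w (u + v) = dotv w u + dotv w v.
Proof. by rewrite dotvC dotvDl !(dotvC w). Qed.
Lemma dotvZr a u v : dotv v (a *: u) = a * dotv v u.
Proof. by rewrite dotvC dotvZl dotvC. Qed.
Lemma dotvNr u v : dotv v (- u) = - dotv v u.
Proof. by rewrite dotvC dotvNl dotvC. Qed.
Lemma dotvBr u v w : dotv w (u - v) = dotv w u - dotv w v.
Proof. by rewrite dotvDr dotvNr. Qed.
Lemma dotv_ge0 u : 0 <= dotv u u.
Proof. by apply: sumr_ge0 => i _; rewrite -expr2 sqr_ge0. Qed.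
Lemma enorm_sq u : enorm u ^+ 2 = dotv u u.
Proof. by rewrite /enorm sqr_sqrtr // dotv_ge0. Qed.
Lemma enorm_ge0 u : 0 <= enorm u.
Proof. exact: sqrtr_ge0. Qed.
Lemma dotv_eq0 u : dotv u u = 0 -> u = 0.
Proof.
move=> h; apply/matrixP => i j; rewrite ord1 mxE.
have /psumr_eq0P := h; move=> /(_ (fun i _ => sqr_ge0 (u i 0))).
by move=> /(_ i isT) /eqP; rewrite mulf_eq0 orbb => /eqP.
Qed.
Lemma dotv_delta u (i : 'I_k) : dotv u (delta_mx i 0) = u i 0.
Proof.
rewrite /dotv (bigD1 i) //= big1 ?addr0; first by rewrite mxE !eqxx mulr1.
by move=> j /negbTE nj; rewrite mxE nj mulr0.
Qed.
End S.



Lemma grad_derive {R : realType} {k : nat} (f : 'cV[R]_k -> R) gf (x w : 'cV[R]_k) :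
  is_gradient f gf -> derive f x w = dotv (gf x) w.
Proof.
move=> hg; have [d1 e1] := hg x.
exact: (etrans (deriveE w d1) (e1 w)).
Qed.

Lemma grad_shift (R : realType) (k : nat) (f : 'cV[R]_k -> R) gf (x v : 'cV[R]_k) :
  is_gradient f gf -> (forall y, f (y + v) = f y) -> gf (x + v) = gf x.
Proof.
move=> hg hv; apply/matrixP => i j; rewrite ord1.
rewrite -(dotv_delta (gf (x+v)) i) -(dotv_delta (gf x) i).
rewrite -(grad_derive f gf (x + v) (delta_mx i 0) hg) -(grad_derive f gf x (delta_mx i 0) hg).
rewrite /derive. 
congr lim.
(have E : (fun h : R => h^-1 *: ((f \o shift (x + v)) (h *: delta_mx i 0) - f (x + v))) = (fun h : R => h^-1 *: ((f \o shift x) (h *: delta_mx i 0) - f x))).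
  apply: funext => h /=. rewrite !addrA !hv. done.
by rewrite E.
Qed.



Lemma line_derive {R : realType} {k : nat} (f : 'cV[R]_k -> R) gf (x d : 'cV[R]_k) (t : R) :
  is_gradient f gf -> is_derive t 1 (fun s : R => f (x + s *: d)) (dotv (gf (x + t *: d)) d).
Proof.
move=> hg; have [d1 e1] := hg (x + t *: d).
have E : (fun h : R => h^-1 *: (((fun s : R => f (x + s *: d)) \o shift t) (h *: 1) - f (x + t *: d)))
   = (fun h : R => h^-1 *: ((f \o shift (x + t *: d)) (h *: d) - f (x + t *: d))).
  apply: funext => h /=. rewrite scaler1 scalerDl addrCA addrA. done.
apply: DeriveDef.
  rewrite /derivable. rewrite E. have D := @diff_derivable _ _ _ f (x + t *: d) d d1. exact: D.
rewrite /derive. rewrite E. 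
exact: (grad_derive f gf (x + t *: d) d hg).
Qed.

Section Desc.
Local Open Scope classical_set_scope.




Lemma descent {R : realType} {k : nat} (f : 'cV[R]_k -> R) gf (L : R) (x d : 'cV[R]_k) :
  L_smooth f gf L -> 0 < L -> f (x + d) <= f x + dotv (gf x) d + L * dotv d d.
Proof.
move=> [hg hl] L0.
have hder : forall s : R, is_derive s (1:R) (fun s : R => f (x + s *: d)) (dotv (gf (x + s *: d)) d).
  by move=> s; apply: line_derive.
have hcont : {within `[0, 1], continuous (fun s : R => f (x + s *: d))}.
  apply: derivable_within_continuous => s _.
  exact: (@ex_derive _ _ _ _ _ _ _ (hder s)).
have [c] := MVT (@ltr01 R) (fun s _ => hder s) hcont.
rewrite in_itv /= => /andP[c0 c1].
rewrite scale1r scale0r addr0 subr0 mulr1 => E.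
have -> : f (x + d) = f x + dotv (gf (x + c *: d)) d by rewrite -E; lra.
set a := gf (x + c *: d) - gf x.
have -> : gf (x + c *: d) = gf x + a by rewrite /a [gf x + _]addrC subrK.
rewrite dotvDl.
suff : dotv a d <= L * dotv d d by lra.
have hd := dotv_ge0 d.
have ha : dotv a a <= L ^+ 2 * dotv d d.
  have := hl (x + c *: d) x; rewrite -/a.
  have -> : x + c *: d - x = c *: d by rewrite addrC addKr.
  move=> h.
  have h2 : enorm a ^+ 2 <= L ^+ 2 * enorm (c *: d) ^+ 2.
    have := enorm_ge0 a; nra.
  rewrite !enorm_sq dotvZl dotvZr in h2.
  have h3 : c * (c * dotv d d) <= dotv d d.
    rewrite -[X in _ <= X]mul1r mulrA; apply: ler_wpM2r => //. nra.
  have hL2 : 0 <= L ^+ 2 by rewrite sqr_ge0.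
  apply: (le_trans h2); exact: ler_wpM2l.
clearbody a.
have h0 := dotv_ge0 (a - L *: d).
rewrite !(dotvBl, dotvBr, dotvZl, dotvZr) (dotvC d a) in h0.
nra.
Qed.

End Desc.



Lemma grad_bound {R : realType} {k : nat} (f : 'cV[R]_k -> R) gf (L b : R) (x : 'cV[R]_k) :
  L_smooth f gf L -> 0 < L -> (forall y, b <= f y) -> dotv (gf x) (gf x) <= 4 * L * (f x - b).
Proof.
move=> hs L0 hb.
set s := (2 * L)^-1.
have Ls : L * s = 2^-1 by rewrite /s; field; rewrite gt_eqF.
have s0 : 0 < s by rewrite /s invr_gt0 mulr_gt0.
have := descent f gf L x (- s *: gf x) hs L0.
rewrite dotvZr !dotvZl dotvZr.
have := hb (x + - s *: gf x).
have := dotv_ge0 (gf x).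
set gg := dotv (gf x) (gf x).
move=> h1 h2 h3.
have h4 : b <= f x - s * gg + (L * s) * s * gg by lra.
rewrite Ls in h4.
have h5 : s * gg / 2 <= f x - b by lra.
have : 4 * L * (s * gg / 2) = gg.
  rewrite /s; field; rewrite gt_eqF //.
move=> <-; apply: ler_wpM2l => //; lra.
Qed.



Theorem lemma2p14 (R : realType) (n p m : nat) (hn : (0 < n)%N)
  (f : 'I_n -> 'cV[R]_p -> R) (gf : 'I_n -> 'cV[R]_p -> 'cV[R]_p) (L : 'I_n -> R)
  (hL : forall i, 0 < L i) (hsmooth : forall i, L_smooth (f i) (gf i) (L i))
  (g : 'cV[R]_m -> R) (gg : 'cV[R]_m -> 'cV[R]_m) (alpha Lg : R)
  (halpha : 0 < alpha) (hgconv : strongly_convex g gg alpha) (hgsmooth : L_smooth g gg Lg)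
  (H : 'M[R]_(m, p))
  (hf : forall x, n%:R^-1 * (\sum_(i < n) f i x) = g (H *m x))
  (hne : exists x0, argmin_set (fun x => n%:R^-1 * (\sum_(i < n) f i x)) x0)
  (hcases : (forall i, exists b : R, forall x, b <= f i x) \/
            (forall i x v, H *m v = 0 -> f i (x + v) = f i x)) :
  exists M : R, forall x, argmin_set (fun x => n%:R^-1 * (\sum_(i < n) f i x)) x ->
    Num.sqrt (\sum_(j < n) enorm (gf j x) ^+ 2) <= M.
Proof.
have [x0 hx0] := hne.
have hn0 : n%:R^-1 != 0 :> R by rewrite invr_eq0 pnatr_eq0 -lt0n.
have Seq : forall x, argmin_set (fun x => n%:R^-1 * (\sum_(i < n) f i x)) x ->
    \sum_(i < n) f i x = \sum_(i < n) f i x0.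
  move=> x hx; apply: (mulfI hn0); apply/le_anti/andP; split; [exact: hx | exact: hx0].
case: hcases => [hb | hker].
- have [b hb'] := choice hb.
  set K := \sum_(i < n) f i x0 - \sum_(i < n) b i.
  exists (Num.sqrt (\sum_(j < n) (4 * L j * K))) => x hx.
  have hle : forall j, f j x - b j <= K.
    move=> j; rewrite /K -(Seq x hx) -sumrB (bigD1 j) //= lerDl.
    by apply: sumr_ge0 => i _; rewrite subr_ge0.
  have hsum : \sum_(j < n) enorm (gf j x) ^+ 2 <= \sum_(j < n) (4 * L j * K).
    apply: ler_sum => j _; rewrite enorm_sq.
    apply: (le_trans (grad_bound _ _ _ _ x (hsmooth j) (hL j) (hb' j))).
    apply: ler_wpM2l; last exact: hle.
    by apply: mulr_ge0 => //; apply: ltW.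
  rewrite ler_sqrt //; apply: le_trans hsum.
  by apply: sumr_ge0 => j _; rewrite exprn_ge0 // enorm_ge0.
- exists (Num.sqrt (\sum_(j < n) enorm (gf j x0) ^+ 2)) => x hx.
  suff HX : H *m (x - x0) = 0.
    have -> : x = x0 + (x - x0) by rewrite addrC subrK.
    under eq_bigr => j _ do rewrite (@grad_shift _ _ (f j) (gf j) x0 (x - x0) (hsmooth j).1 (fun y => hker j y _ HX)).
    done.
  have hsc := hgconv.2.
  have hg1 : g (H *m x) = g (H *m x0) by rewrite -!hf Seq.
  have hmin : forall z, g (H *m x0) <= g (H *m z) by move=> z; rewrite -!hf; exact: hx0.
  have hw : g (H *m x0) <= g (2^-1 *: (H *m x + H *m x0)).
    by rewrite -mulmxDr scalemxAr; exact: hmin.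
  move: hw (hsc (2^-1 *: (H *m x + H *m x0)) (H *m x0)) (hsc (2^-1 *: (H *m x + H *m x0)) (H *m x)).
  set w := 2^-1 *: (H *m x + H *m x0).
  set u := H *m x - w.
  have hu1 : H *m x0 - w = - u.
    apply/matrixP => i j; rewrite /u /w !mxE; lra.
  have hu2 : H *m x - H *m x0 = u + u.
    apply/matrixP => i j; rewrite /u /w !mxE; lra.
  rewrite hu1 -/u !enorm_sq !(dotvNl, dotvNr, opprK).
  move=> hw c0 c1.
  have hu := dotv_ge0 u.
  have huu : alpha * dotv u u <= 0 by lra.
  have huu' : dotv u u <= 0 by nra.
  have u0 : u = 0 by apply: dotv_eq0; apply/le_anti; rewrite huu' hu.
  by rewrite mulmxBr hu2 u0 addr0.
Qed.
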